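(* Let $(\Sigma_+,\Sigma_-,N_1,N_2,N_3)$ be a solution of the Wainwright–Hsu system satisfying the constraint, and define for $i=1,2,3$ $$a_i(\tau)=\exp\Big(-\int_0^\tau(3\Sigma_i(s)+1)\,ds\Big),$$ where $\Sigma_1=-\frac23\Sigma_+$, $\Sigma_2=\frac13\Sigma_++\frac1{\sqrt3}\Sigma_-$, $\Sigma_3=\frac13\Sigma_+-\frac1{\sqrt3}\Sigma_-$. (a) If $N_1=0$, $N_2,N_3>0$ and $N_2=N_3$, $\Sigma_-=0$ never hold simultaneously, then $a_i(\tau)\to0$ as $\tau\to\infty$ for $i=1,2,3$. (b) If $N_1<0$ and $N_2,N_3>0$, then $a_2(\tau)\to0$ and $a_3(\tau)\to0$ as $\tau\to\infty$, and $a_1$ is bounded on $[0,\infty)$; in particular all three $a_i$ are bounded as $\tau\to\infty$.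
   Context: Wainwright–Hsu system: for functions $N_1,N_2,N_3,\Sigma_+,\Sigma_-$ of $\tau\in\mathbb{R}$ (prime denotes $d/d\tau$), $N_1'=(q-4\Sigma_+)N_1$, $N_2'=(q+2\Sigma_++2\sqrt3\Sigma_-)N_2$, $N_3'=(q+2\Sigma_+-2\sqrt3\Sigma_-)N_3$, $\Sigma_+'=-(2-q)\Sigma_+-3S_+$, $\Sigma_-'=-(2-q)\Sigma_--3S_-$, where $q=2(\Sigma_+^2+\Sigma_-^2)$, $S_+=\frac12[(N_2-N_3)^2-N_1(2N_1-N_2-N_3)]$, $S_-=\frac{\sqrt3}{2}(N_3-N_2)(N_1-N_2-N_3)$, together with the constraint $\Sigma_+^2+\Sigma_-^2+\frac34[N_1^2+N_2^2+N_3^2-2(N_1N_2+N_2N_3+N_1N_3)]=1$. Solutions with these sign conditions exist for all $\tau\in\mathbb{R}$. (Geometrically, the spacetime metric is $-dt^2+\sum_i a_i^{-2}\xi^i\otimes\xi^i$ with $\xi^i$ a left-invariant coframe and $dt/d\tau=3/\theta$.) *)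

(* Defs.v *)
From Stdlib Require Import Reals.
From Coquelicot Require Import Coquelicot.
Open Scope R_scope.

Definition q_WH (Sp Sm : R) : R := 2 * (Sp ^ 2 + Sm ^ 2).
Definition Splus_WH (N1 N2 N3 : R) : R :=
  / 2 * ((N2 - N3) ^ 2 - N1 * (2 * N1 - N2 - N3)).
Definition Sminus_WH (N1 N2 N3 : R) : R :=
  sqrt 3 / 2 * (N3 - N2) * (N1 - N2 - N3).

Definition WH_solution (N1 N2 N3 Sp Sm : R -> R) : Prop :=
  (forall t, is_derive N1 t ((q_WH (Sp t) (Sm t) - 4 * Sp t) * N1 t)) /\
  (forall t, is_derive N2 t
     ((q_WH (Sp t) (Sm t) + 2 * Sp t + 2 * sqrt 3 * Sm t) * N2 t)) /\
  (forall t, is_derive N3 t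
     ((q_WH (Sp t) (Sm t) + 2 * Sp t - 2 * sqrt 3 * Sm t) * N3 t)) /\
  (forall t, is_derive Sp t
     (- (2 - q_WH (Sp t) (Sm t)) * Sp t - 3 * Splus_WH (N1 t) (N2 t) (N3 t))) /\
  (forall t, is_derive Sm t
     (- (2 - q_WH (Sp t) (Sm t)) * Sm t - 3 * Sminus_WH (N1 t) (N2 t) (N3 t))) /\
  (forall t, Sp t ^ 2 + Sm t ^ 2
     + 3 / 4 * (N1 t ^ 2 + N2 t ^ 2 + N3 t ^ 2
                - 2 * (N1 t * N2 t + N2 t * N3 t + N1 t * N3 t)) = 1).

Definition Sigma1 (Sp Sm : R -> R) (s : R) : R := - (2 / 3) * Sp s.
Definition Sigma2 (Sp Sm : R -> R) (s : R) : R := / 3 * Sp s + / sqrt 3 * Sm s.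
Definition Sigma3 (Sp Sm : R -> R) (s : R) : R := / 3 * Sp s - / sqrt 3 * Sm s.

Definition a_of (Sig : R -> R) (tau : R) : R :=
  exp (- RInt (fun s => 3 * Sig s + 1) 0 tau).

Definition bounded_on_nonneg (f : R -> R) : Prop :=
  exists M : R, forall tau, 0 <= tau -> Rabs (f tau) <= M.

(* Main.v *)
Require Import Defs.
From Stdlib Require Import Reals Lra Psatz Classical FunctionalExtensionality.
From Coquelicot Require Import Coquelicot.
Open Scope R_scope.

Definition Iof (f : R -> R) (t : R) : R := RInt f 0 t.
Definition A (f : R -> R) (t : R) : R := exp (- Iof f t).

Lemma D_eq (f : R -> R) (x l : R) : is_derive f x l -> Derive (fun y : R => f y) x = l.
Proof. intros H. apply is_derive_unique. exact H. Qed.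

Lemma A_deriv (f : R -> R) : (forall x, continuous f x) -> forall t, is_derive (A f) t (- f t * A f t).
Proof.
  intros Hc t. unfold A.
  assert (HI: is_derive (Iof f) t (f t)).
  { apply (is_derive_RInt f (Iof f) 0 t).
    - apply filter_forall. intros b. unfold Iof. apply (RInt_correct (V:=R_CompleteNormedModule)). apply ex_RInt_continuous. intros; apply Hc.
    - apply Hc. }
  auto_derive.
  - exists (f t). exact HI.
  - rewrite (D_eq _ _ _ HI). ring.
Qed.

Lemma A_pos f t : 0 < A f t.
Proof. unfold A. apply exp_pos. Qed.

Lemma A_0 f : A f 0 = 1.
Proof. unfold A, Iof. rewrite RInt_point. unfold zero; simpl. rewrite Ropp_0, exp_0. reflexivity. Qed.

Lemma mono_nonincr f a b : a <= b ->
  (forall x, a <= x <= b -> exists l, is_derive f x l /\ l <= 0) -> f b <= f a.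
Proof.
  intros Hab H.
  destruct (MVT_gen f a b (Derive f)) as [c [Hc Heq]].
  - intros x Hx. rewrite Rmin_left in Hx by lra. rewrite Rmax_right in Hx by lra.
    destruct (H x ltac:(lra)) as [l [Hl _]]. rewrite (is_derive_unique _ _ _ Hl). exact Hl.
  - intros x Hx. rewrite Rmin_left in Hx by lra. rewrite Rmax_right in Hx by lra.
    destruct (H x Hx) as [l [Hl _]]. apply continuity_pt_filterlim.
    apply (ex_derive_continuous f x). exists l; exact Hl.
  - rewrite Rmin_left in Hc by lra. rewrite Rmax_right in Hc by lra.
    destruct (H c Hc) as [l [Hl Hl0]]. rewrite (is_derive_unique _ _ _ Hl) in Heq.
    assert (l * (b - a) <= 0) by nra. lra.
Qed.

Lemma lim0 (g : R -> R) : (forall eps, 0 < eps -> exists T, forall t, T <= t -> Rabs (g t) < eps) ->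
  is_lim g p_infty 0.
Proof.
  intros H. apply is_lim_spec. intros eps. destruct (H eps (cond_pos eps)) as [T HT].
  exists T. intros x Hx. rewrite Rminus_0_r. apply HT. lra.
Qed.
Definition Q (Sp T : R -> R) (t : R) : R := 2 * Sp t ^ 2 + 2/3 * T t ^ 2.

Definition RWH (N1 N2 N3 Sp T : R -> R) : Prop :=
 (forall t, is_derive N1 t ((Q Sp T t - 4 * Sp t) * N1 t)) /\
 (forall t, is_derive N2 t ((Q Sp T t + 2 * Sp t + 2 * T t) * N2 t)) /\
 (forall t, is_derive N3 t ((Q Sp T t + 2 * Sp t - 2 * T t) * N3 t)) /\
 (forall t, is_derive Sp t (-(2 - Q Sp T t) * Sp t
     - 3/2 * ((N2 t - N3 t)^2 - N1 t * (2 * N1 t - N2 t - N3 t)))) /\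
 (forall t, is_derive T t (-(2 - Q Sp T t) * T t
     - 9/2 * (N3 t - N2 t) * (N1 t - N2 t - N3 t))) /\
 (forall t, Sp t ^ 2 + T t ^ 2 / 3 + 3/4 * (N1 t ^ 2 + N2 t ^ 2 + N3 t ^ 2
     - 2 * (N1 t * N2 t + N2 t * N3 t + N1 t * N3 t)) = 1).

Lemma is_derive_eq (f : R -> R) (x l l' : R) : is_derive f x l -> l = l' -> is_derive f x l'.
Proof. intros H <-. exact H. Qed.

Lemma s3_2 : sqrt 3 ^ 2 = 3.
Proof. apply pow2_sqrt. lra. Qed.
Lemma s3_3 : sqrt 3 ^ 3 = 3 * sqrt 3.
Proof. replace (sqrt 3 ^ 3) with (sqrt 3 ^ 2 * sqrt 3) by ring. rewrite s3_2. ring. Qed.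
Lemma s3_4 : sqrt 3 ^ 4 = 9.
Proof. replace (sqrt 3 ^ 4) with (sqrt 3 ^ 2 * sqrt 3 ^ 2) by ring. rewrite s3_2. ring. Qed.
Lemma s3_pos : 0 < sqrt 3.
Proof. apply sqrt_lt_R0. lra. Qed.

Ltac s3solve := unfold Q, q_WH, Splus_WH, Sminus_WH; unfold Rdiv;
  ring_simplify; rewrite ?s3_4, ?s3_3, ?s3_2; field.

Lemma WH_RWH N1 N2 N3 Sp Sm : WH_solution N1 N2 N3 Sp Sm ->
  RWH N1 N2 N3 Sp (fun t => sqrt 3 * Sm t).
Proof.
  intros (H1 & H2 & H3 & Hp & Hm & Hc).
  split; [|split; [|split; [|split; [|split]]]]; intros t.
  - eapply is_derive_eq. apply H1. s3solve.
  - eapply is_derive_eq. apply H2. s3solve.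
  - eapply is_derive_eq. apply H3. s3solve.
  - eapply is_derive_eq. apply Hp. s3solve.
  - eapply is_derive_eq. apply (is_derive_scal _ _ (sqrt 3) _ (Hm t)). unfold scal; simpl; unfold mult; simpl.
    s3solve.
  - rewrite <- (Hc t). s3solve.
Qed.

Lemma RWH_sym N1 N2 N3 Sp T : RWH N1 N2 N3 Sp T -> RWH N1 N3 N2 Sp (fun t => - T t).
Proof.
  intros (H1 & H2 & H3 & Hp & Hm & Hc).
  split; [|split; [|split; [|split; [|split]]]]; intros t.
  - eapply is_derive_eq. apply H1. unfold Q; cbv beta; field.
  - eapply is_derive_eq. apply H3. unfold Q; cbv beta; field.
  - eapply is_derive_eq. apply H2. unfold Q; cbv beta; field.
  - eapply is_derive_eq. apply Hp. unfold Q; cbv beta; field.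
  - eapply is_derive_eq. apply (is_derive_opp _ _ _ (Hm t)). unfold opp; simpl. unfold Q; cbv beta; field.
  - rewrite <- (Hc t). cbv beta. field.
Qed.

Lemma exp_decay (k C eps : R) : 0 < k -> 0 < eps ->
  exists T, forall t, T <= t -> C * exp (- k * t) < eps.
Proof.
  intros Hk He. destruct (Rle_lt_dec C 0) as [HC|HC].
  - exists 0. intros t _. assert (0 < exp (-k*t)) by apply exp_pos. nra.
  - exists ((ln C - ln eps) / k + 1). intros t Ht.
    assert (H1: - k * t < ln eps - ln C).
    { assert (k * t >= k * ((ln C - ln eps) / k + 1)) by (apply Rle_ge, Rmult_le_compat_l; lra).
      assert (k * ((ln C - ln eps) / k + 1) = ln C - ln eps + k) by (field; lra). lra. }
    apply exp_increasing in H1. unfold Rminus in H1; rewrite exp_plus, exp_Ropp, !exp_ln in H1 by lra.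
    assert (C * exp (-k*t) < C * (eps * / C)) by (apply Rmult_lt_compat_l; lra).
    assert (C * (eps * / C) = eps) by (field; lra). nra.
Qed.

Lemma cont_fun (f : R -> R) : (forall x, ex_derive f x) -> forall x, continuous f x.
Proof. intros H x. apply (ex_derive_continuous (K:=R_AbsRing) (V:=R_NormedModule)). apply H. Qed.

Ltac exd H := match goal with |- ex_derive _ ?x => eexists; apply (H x) end.
Ltac exd_any := match goal with |- ex_derive (fun y => ?g y) ?x =>
   match goal with H: forall t, is_derive g t _ |- _ => exact (ex_intro _ _ (H x)) end end.
Ltac side := repeat match goal with
  | |- _ /\ _ => split
  | |- True => exact I
  | |- ex_derive _ _ => exd_any
  end.
Ltac posit := repeat (apply Rmult_lt_0_compat || apply Rinv_0_lt_compat || apply exp_pos || apply A_pos); try lra.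
Ltac nz := apply Rgt_not_eq; posit.

Section B.
Variables (N1 N2 N3 Sp T : R -> R).
Hypothesis HR : RWH N1 N2 N3 Sp T.
Hypothesis Hsign : forall t, N1 t < 0 /\ 0 < N2 t /\ 0 < N3 t.

Let f2 := fun s => 1 + Sp s + T s.
Let f1 := fun s => 1 - 2 * Sp s.

Lemma b_bounds t : - N1 t * N2 t <= 2/3 /\ - N1 t * N3 t <= 2/3.
Proof.
  destruct HR as (_ & _ & _ & _ & _ & Hc). specialize (Hc t). destruct (Hsign t) as (a & b & c).
  assert (0 <= - N1 t * N2 t) by nra. assert (0 <= - N1 t * N3 t) by nra.
  assert (0 <= Sp t ^ 2) by nra. assert (0 <= T t ^ 2) by nra. assert (0 <= N1 t ^ 2) by nra.
  assert (0 <= (N2 t - N3 t)^2) by apply pow2_ge_0. assert (Sp t ^ 2 + T t ^ 2 / 3 + 3/4 * (N1 t ^ 2 + (N2 t - N3 t)^2 + 2 * (- N1 t * N2 t) + 2 * (- N1 t * N3 t)) = 1) by (rewrite <- Hc; field). split; lra.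
Qed.

Lemma f2_cont : forall x, continuous f2 x.
Proof.
  destruct HR as (H1 & H2 & H3 & Hp & Hm & Hc).
  apply cont_fun. intros x. unfold f2. auto_derive. side.
Qed.

Lemma b_a2 : exists C, forall t, 0 <= t -> A f2 t ^ 2 <= C * exp (- (2/3) * t).
Proof.
  destruct HR as (H1 & H2 & H3 & Hp & Hm & Hc).
  pose proof (A_deriv f2 f2_cont) as HA.
  set (F := fun t => A f2 t ^ 2 * exp (2/3 * t) / ((- N1 t) ^ 3 * N2 t ^ 2 * N3 t)).
  exists (F 0 * (2/3)^3). intros t Ht.
  assert (HF: F t <= F 0).
  { apply mono_nonincr; [lra|]. intros x Hx. destruct (Hsign x) as (a & b & c).
    eexists; split.
    - unfold F. auto_derive.
      + side. nz.
      + reflexivity.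
    - rewrite (D_eq _ _ _ (HA x)), (D_eq _ _ _ (H1 x)), (D_eq _ _ _ (H2 x)), (D_eq _ _ _ (H3 x)).
      match goal with |- ?e <= 0 => replace e with
        (F x * (- (12 * (Sp x - 1/6)^2 + 4 * (T x + 1/2)^2))) end.
      + assert (0 < F x). { unfold F. unfold Rdiv. posit. }
        assert (0 <= 12 * (Sp x - 1/6)^2 + 4 * (T x + 1/2)^2).
        { assert (0 <= (Sp x - 1/6)^2) by apply pow2_ge_0. assert (0 <= (T x + 1/2)^2) by apply pow2_ge_0. lra. }
        assert (0 <= F x * (12 * (Sp x - 1/6)^2 + 4 * (T x + 1/2)^2)) by (apply Rmult_le_pos; lra). lra.
      + unfold F, f2, Q. field. repeat split; lra. }
  destruct (Hsign t) as (a & b & c). destruct (b_bounds t) as [B2 B3].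
  set (P := (- N1 t) ^ 3 * N2 t ^ 2 * N3 t).
  assert (HP : 0 < P) by (unfold P; posit; apply pow_lt; lra).
  assert (HPb : P <= (2/3)^3).
  { replace P with ((- N1 t * N2 t) * (- N1 t * N2 t) * (- N1 t * N3 t)) by (unfold P; ring).
    assert (0 <= - N1 t * N2 t) by (apply Rmult_le_pos; lra).
    assert (0 <= - N1 t * N3 t) by (apply Rmult_le_pos; lra).
    replace ((2/3)^3) with (2/3 * (2/3) * (2/3)) by ring.
    apply Rmult_le_compat; try apply Rmult_le_pos; try lra. apply Rmult_le_compat; lra. }
  assert (HE : exp (2/3 * t) * exp (- (2/3) * t) = 1).
  { rewrite <- exp_plus. replace (2/3*t + - (2/3) * t) with 0 by ring. apply exp_0. }
  assert (HAt : A f2 t ^ 2 = F t * P * exp (- (2/3) * t)).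
  { assert (HFP : F t * P = A f2 t ^ 2 * exp (2/3 * t)) by (unfold F; fold P; field; lra).
    rewrite HFP. replace (A f2 t ^ 2 * exp (2/3 * t) * exp (- (2/3) * t)) with
      (A f2 t ^ 2 * (exp (2/3 * t) * exp (- (2/3) * t))) by ring. rewrite HE; ring. }
  assert (HF0 : 0 <= F 0). { unfold F. unfold Rdiv. apply Rmult_le_pos. apply Rmult_le_pos. apply pow2_ge_0. left; apply exp_pos.
    left. apply Rinv_0_lt_compat. destruct (Hsign 0) as (a0 & b0 & c0). posit; apply pow_lt; lra. }
  rewrite HAt. pose proof (exp_pos (- (2/3) * t)).
  assert (0 <= F t). { unfold F. unfold Rdiv. apply Rmult_le_pos. apply Rmult_le_pos. apply pow2_ge_0. left; apply exp_pos.
    left. apply Rinv_0_lt_compat. fold P. exact HP. }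
  apply Rmult_le_compat_r; [lra|]. apply Rmult_le_compat; lra.
Qed.

Lemma f1_cont : forall x, continuous f1 x.
Proof.
  destruct HR as (H1 & H2 & H3 & Hp & Hm & Hc).
  apply cont_fun. intros x. unfold f1. auto_derive. side.
Qed.

Lemma b_a1 : exists C, forall t, 0 <= t -> A f1 t ^ 2 <= C.
Proof.
  destruct HR as (H1 & H2 & H3 & Hp & Hm & Hc).
  pose proof (A_deriv f1 f1_cont) as HA.
  set (F := fun t => A f1 t ^ 2 / ((- N1 t) ^ 2 * N2 t * N3 t)).
  exists (F 0 * (2/3)^2). intros t Ht.
  assert (HF: F t <= F 0).
  { apply mono_nonincr; [lra|]. intros x Hx. destruct (Hsign x) as (a & b & c).
    eexists; split.
    - unfold F. auto_derive.
      + side. nz.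
      + reflexivity.
    - rewrite (D_eq _ _ _ (HA x)), (D_eq _ _ _ (H1 x)), (D_eq _ _ _ (H2 x)), (D_eq _ _ _ (H3 x)).
      match goal with |- ?e <= 0 => replace e with
        (F x * (- (2 * (2 * Sp x - 1)^2 + 8/3 * T x ^ 2))) end.
      + assert (0 < F x). { unfold F. unfold Rdiv. posit. }
        assert (0 <= 2 * (2 * Sp x - 1)^2 + 8/3 * T x ^ 2).
        { assert (0 <= (2 * Sp x - 1)^2) by apply pow2_ge_0. assert (0 <= T x ^ 2) by apply pow2_ge_0. lra. }
        assert (0 <= F x * (2 * (2 * Sp x - 1)^2 + 8/3 * T x ^ 2)) by (apply Rmult_le_pos; lra). lra.
      + unfold F, f1, Q. field. repeat split; lra. }
  destruct (Hsign t) as (a & b & c). destruct (b_bounds t) as [B2 B3].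
  set (P := (- N1 t) ^ 2 * N2 t * N3 t).
  assert (HP : 0 < P) by (unfold P; posit; apply pow_lt; lra).
  assert (HPb : P <= (2/3)^2).
  { replace P with ((- N1 t * N2 t) * (- N1 t * N3 t)) by (unfold P; ring).
    replace ((2/3)^2) with (2/3 * (2/3)) by ring.
    apply Rmult_le_compat; try apply Rmult_le_pos; lra. }
  assert (HAt : A f1 t ^ 2 = F t * P) by (unfold F; fold P; field; lra).
  assert (HF0 : 0 <= F 0). { unfold F. unfold Rdiv. apply Rmult_le_pos. apply pow2_ge_0.
    left. apply Rinv_0_lt_compat. destruct (Hsign 0) as (a0 & b0 & c0). posit; apply pow_lt; lra. }
  rewrite HAt.
  assert (0 <= F t). { unfold F. unfold Rdiv. apply Rmult_le_pos. apply pow2_ge_0.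
    left. apply Rinv_0_lt_compat. fold P. exact HP. }
  apply Rmult_le_compat; lra.
Qed.
End B.

Lemma mono_nondecr f a b : a <= b ->
  (forall x, a <= x <= b -> exists l, is_derive f x l /\ 0 <= l) -> f a <= f b.
Proof.
  intros Hab H. assert (- f b <= - f a); [|lra].
  apply (mono_nonincr (fun x => - f x)); auto.
  intros x Hx. destruct (H x Hx) as [l [Hl Hl0]]. exists (- l). split; [|lra].
  apply (is_derive_opp _ _ _ Hl).
Qed.

Lemma sq_nonneg x : 0 <= x ^ 2.
Proof. apply pow2_ge_0. Qed.

Lemma sq_lt a e : 0 < a -> 0 < e -> a ^ 2 < e ^ 2 -> a < e.
Proof.
  intros Ha He H. destruct (Rlt_le_dec a e) as [h|h]; [exact h|].
  assert (e ^ 2 <= a ^ 2) by (apply pow_incr; lra). lra.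
Qed.

Lemma abs_le1 w : w ^ 2 <= 1 -> -1 <= w <= 1.
Proof. intros H. replace (w^2) with (w*w) in H by ring. split; nra. Qed.

Section Acase.
Variables (N1 N2 N3 Sp T : R -> R).
Hypothesis HR : RWH N1 N2 N3 Sp T.
Hypothesis Hs : forall t, N1 t = 0 /\ 0 < N2 t /\ 0 < N3 t.
Hypothesis Hex : forall t, ~ (N2 t = N3 t /\ T t = 0).

Let f2 := fun s => 1 + Sp s + T s.
Let f1 := fun s => 1 - 2 * Sp s.
Let u := fun s => 1 + Sp s.
Let D := fun s => N2 s - N3 s.
Let S := fun s => N2 s + N3 s.

Lemma a_con t : Sp t ^ 2 + T t ^ 2 / 3 + 3/4 * D t ^ 2 = 1.
Proof.
  destruct HR as (_ & _ & _ & _ & _ & Hc). pose proof (Hc t) as H. destruct (Hs t) as (a & _ & _).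
  rewrite a in H. unfold D. lra.
Qed.

Lemma a_Q t : Q Sp T t = 2 - 3/2 * D t ^ 2.
Proof. pose proof (a_con t). unfold Q. lra. Qed.

Lemma a_u t : 0 < u t.
Proof.
  pose proof (a_con t). unfold u. destruct (Rlt_le_dec 0 (1 + Sp t)) as [h|h]; [exact h|].
  exfalso. apply (Hex t).
  assert (Sp t ^ 2 >= 1) by nra. pose proof (sq_nonneg (T t)). pose proof (sq_nonneg (D t)).
  assert (T t ^ 2 = 0) by lra. assert (D t ^ 2 = 0) by lra.
  assert (HT : T t * T t = 0) by lra. assert (HD : D t * D t = 0) by lra.
  split. destruct (Rmult_integral _ _ HD); unfold D in *; lra. destruct (Rmult_integral _ _ HT); lra.
Qed.

Lemma a_D2 t : D t ^ 2 <= 8/3 * u t.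
Proof.
  pose proof (a_con t). pose proof (a_u t). unfold u in *. pose proof (sq_nonneg (T t)).
  assert (Sp t ^ 2 = Sp t * Sp t) by ring. nra.
Qed.

Lemma a_dN2 t : is_derive N2 t ((2 - 3/2 * D t ^ 2 + 2 * Sp t + 2 * T t) * N2 t).
Proof. destruct HR as (H1 & H2 & H3 & Hp & Hm & Hc). eapply is_derive_eq. apply H2. rewrite a_Q. ring. Qed.
Lemma a_dN3 t : is_derive N3 t ((2 - 3/2 * D t ^ 2 + 2 * Sp t - 2 * T t) * N3 t).
Proof. destruct HR as (H1 & H2 & H3 & Hp & Hm & Hc). eapply is_derive_eq. apply H3. rewrite a_Q. ring. Qed.
Lemma a_dSp t : is_derive Sp t (- 3/2 * D t ^ 2 * u t).
Proof. destruct HR as (H1 & H2 & H3 & Hp & Hm & Hc). eapply is_derive_eq. apply Hp. rewrite a_Q.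
  destruct (Hs t) as (a & _ & _). rewrite a. unfold D, u. field. Qed.
Lemma a_dT t : is_derive T t (- 3/2 * D t ^ 2 * T t - 9/2 * D t * S t).
Proof. destruct HR as (H1 & H2 & H3 & Hp & Hm & Hc). eapply is_derive_eq. apply Hm. rewrite a_Q.
  destruct (Hs t) as (a & _ & _). rewrite a. unfold D, S. field. Qed.

Lemma a_Sp_mono a b : a <= b -> Sp b <= Sp a.
Proof.
  intros Hab. apply mono_nonincr; auto. intros x _. eexists; split. apply a_dSp.
  pose proof (a_u x). pose proof (sq_nonneg (D x)).
  assert (0 <= D x ^ 2 * u x) by (apply Rmult_le_pos; lra). lra.
Qed.

Lemma f2a_cont : forall x, continuous f2 x.
Proof.
  destruct HR as (H1 & H2 & H3 & Hp & Hm & Hc).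
  apply cont_fun. intros x. unfold f2. auto_derive. side.
Qed.
Lemma f1a_cont : forall x, continuous f1 x.
Proof.
  destruct HR as (H1 & H2 & H3 & Hp & Hm & Hc).
  apply cont_fun. intros x. unfold f1. auto_derive. side.
Qed.

Lemma a_F2 : exists K, forall t, 0 <= t -> A f2 t ^ 2 <= K * u t / N2 t.
Proof.
  pose proof (A_deriv f2 f2a_cont) as HA. pose proof a_dN2 as H2. pose proof a_dSp as Hp.
  set (F := fun t => A f2 t ^ 2 * N2 t / (1 + Sp t)).
  exists (F 0). intros t Ht.
  assert (HF: F t <= F 0).
  { apply mono_nonincr; [lra|]. intros x Hx. destruct (Hs x) as (a & b & c). pose proof (a_u x).
    unfold u in *.
    eexists; split.
    - unfold F. auto_derive.
      + side. nz.
      + reflexivity.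
    - rewrite (D_eq _ _ _ (HA x)), (D_eq _ _ _ (H2 x)), (D_eq _ _ _ (Hp x)).
      match goal with |- ?e <= 0 => replace e with 0 end. lra.
      unfold F, f2, D, u. field. lra. }
  destruct (Hs t) as (a & b & c). pose proof (a_u t). unfold u in *.
  apply (Rmult_le_reg_r (N2 t / (1 + Sp t))). unfold Rdiv; posit.
  replace (F 0 * (1 + Sp t) / N2 t * (N2 t / (1 + Sp t))) with (F 0) by (field; lra).
  replace (A f2 t ^ 2 * (N2 t / (1 + Sp t))) with (F t) by (unfold F; field; lra). exact HF.
Qed.

Lemma a_H t : 0 <= t -> / u t <= / u 0 + 4 * t.
Proof.
  intros Ht. pose proof a_dSp as Hp.
  assert (/ u t - 4 * t <= / u 0 - 4 * 0); [|lra].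
  apply (mono_nonincr (fun s => / u s - 4 * s)); [lra|]. intros x _.
  pose proof (a_u x). pose proof (a_D2 x). unfold u in *.
  eexists; split.
  - auto_derive. side. lra. reflexivity.
  - rewrite (D_eq _ _ _ (Hp x)). unfold u.
    match goal with |- ?e <= 0 => replace e with (3/2 * D x ^ 2 / (1 + Sp x) - 4) by (field; lra) end.
    apply (Rmult_le_reg_r (1 + Sp x)); [lra|]. rewrite Rmult_0_l.
    replace ((3/2 * D x ^ 2 / (1 + Sp x) - 4) * (1 + Sp x)) with (3/2 * D x ^ 2 - 4 * (1 + Sp x)) by (field; lra).
    lra.
Qed.

Lemma a_V : exists K, 0 < K /\ forall t, 0 <= t ->
  K * (u t ^ 3 * (/ u 0 + 4 * t)) <= N2 t ^ 2 * N3 t ^ 2.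
Proof.
  pose proof a_dSp as Hp. pose proof a_dN2 as H2. pose proof a_dN3 as H3.
  pose proof (a_u 0) as Hu0. set (c := / u 0). assert (Hc : 0 < c) by (unfold c; posit).
  set (V := fun t => N2 t ^ 2 * N3 t ^ 2 / ((1 + Sp t) ^ 3 * (c + 4 * t))).
  exists (V 0). split.
  - unfold V. destruct (Hs 0) as (a & b & d). pose proof (a_u 0). unfold u in *. unfold Rdiv. posit;
    try apply pow_lt; lra.
  - intros t Ht.
    assert (HV : V 0 <= V t).
    { apply mono_nondecr; [lra|]. intros x Hx. destruct (Hs x) as (a & b & d). pose proof (a_u x).
      pose proof (a_D2 x). pose proof (a_H x ltac:(lra)). fold c in H1. unfold u in *.
      eexists; split.
      - unfold V. auto_derive.
        + side. nz; try apply pow_lt; lra.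
        + reflexivity.
      - rewrite (D_eq _ _ _ (H2 x)), (D_eq _ _ _ (H3 x)), (D_eq _ _ _ (Hp x)).
        match goal with |- 0 <= ?e => replace e with
          (V x * (8 * (1 + Sp x) - 3/2 * D x ^ 2 - 4 / (c + 4 * x))) end.
        + apply Rmult_le_pos.
          * unfold V, Rdiv. left. posit; try apply pow_lt; lra.
          * assert (/ (c + 4 * x) <= 1 + Sp x).
            { replace (1 + Sp x) with (/ / (1 + Sp x)) by (field; lra).
              apply Rinv_le_contravar; [posit|exact H1]. }
            unfold Rdiv. lra.
        + unfold V, D, u. field. repeat split; lra. }
    destruct (Hs t) as (a & b & d). pose proof (a_u t). unfold u in *. fold c.
    unfold V in HV.
    assert (Hpos : 0 < (1 + Sp t) ^ 3 * (c + 4 * t)) by (posit; apply pow_lt; lra).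
    apply (Rmult_le_reg_r (/ ((1 + Sp t) ^ 3 * (c + 4 * t)))). posit.
    replace (V 0 * ((1 + Sp t) ^ 3 * (c + 4 * t)) * / ((1 + Sp t) ^ 3 * (c + 4 * t))) with (V 0) by (field; lra).
    exact HV.
Qed.

Lemma a_u2 t : u t <= 2.
Proof. pose proof (a_con t). pose proof (sq_nonneg (T t)). pose proof (sq_nonneg (D t)). unfold u. nra. Qed.

Lemma a_Z M : 0 < M -> exists T0, 0 <= T0 /\ forall t, T0 <= t -> M * u t <= N2 t.
Proof.
  intros HM. destruct a_V as [K [HK HV]].
  pose proof (a_u 0) as Hu0. set (c := / u 0) in *. assert (Hc : 0 < c) by (unfold c; posit).
  set (B := M ^ 2 * (4 * M ^ 2 + 16/3)).
  exists (Rmax 0 ((B / K - c) / 4 + 1)). split; [apply Rmax_l|].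
  intros t Ht. pose proof (Rmax_l 0 ((B / K - c) / 4 + 1)). pose proof (Rmax_r 0 ((B / K - c) / 4 + 1)).
  destruct (Rle_lt_dec (M * u t) (N2 t)) as [h|h]; [exact h|]. exfalso.
  specialize (HV t ltac:(lra)).
  destruct (Hs t) as (a & b & d). pose proof (a_u t) as Hu. pose proof (a_D2 t) as HD. pose proof (a_u2 t) as Hu2.
  assert (HN2 : N2 t ^ 2 <= M ^ 2 * u t ^ 2).
  { replace (M ^ 2 * u t ^ 2) with ((M * u t) ^ 2) by ring. apply pow_incr. lra. }
  assert (HN3 : N3 t ^ 2 <= u t * (4 * M ^ 2 + 16/3)).
  { assert (N3 t ^ 2 <= 2 * N2 t ^ 2 + 2 * D t ^ 2).
    { pose proof (sq_nonneg (N2 t + D t)). unfold D in *. lra. }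
    assert (M ^ 2 * u t ^ 2 <= 2 * M ^ 2 * u t).
    { replace (M ^ 2 * u t ^ 2) with ((M ^ 2 * u t) * u t) by ring.
      replace (2 * M ^ 2 * u t) with ((M ^ 2 * u t) * 2) by ring.
      apply Rmult_le_compat_l; [|lra]. apply Rmult_le_pos; [apply sq_nonneg|lra]. }
    lra. }
  assert (HP : N2 t ^ 2 * N3 t ^ 2 <= u t ^ 3 * B).
  { apply Rle_trans with ((M ^ 2 * u t ^ 2) * (u t * (4 * M ^ 2 + 16/3))).
    - apply Rmult_le_compat; try apply sq_nonneg; lra.
    - unfold B. right. ring. }
  assert (Hu3 : 0 < u t ^ 3) by (apply pow_lt; lra).
  assert (K * (c + 4 * t) <= B).
  { apply (Rmult_le_reg_l (u t ^ 3)); [exact Hu3|].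
    replace (u t ^ 3 * (K * (c + 4 * t))) with (K * (u t ^ 3 * (c + 4 * t))) by ring. lra. }
  assert (c + 4 * t <= B / K).
  { apply (Rmult_le_reg_l K); [exact HK|]. replace (K * (B / K)) with B by (field; lra). exact H1. }
  lra.
Qed.

Lemma a_lim2 : is_lim (A f2) p_infty 0.
Proof.
  apply lim0. intros eps Heps. destruct a_F2 as [K HK].
  set (M := (Rabs K + 1) / eps ^ 2).
  assert (HM : 0 < M) by (unfold M, Rdiv; apply Rmult_lt_0_compat; [pose proof (Rabs_pos K); lra | apply Rinv_0_lt_compat, pow_lt; lra]).
  destruct (a_Z M HM) as [T0 [HT0 HZ]]. exists T0. intros t Ht.
  rewrite Rabs_pos_eq by (left; apply A_pos).
  apply sq_lt; [apply A_pos|exact Heps|].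
  specialize (HK t ltac:(lra)). specialize (HZ t Ht).
  destruct (Hs t) as (a & b & d). pose proof (a_u t) as Hu.
  assert (K * u t / N2 t <= Rabs K / M).
  { assert (u t / N2 t <= / M).
    { apply (Rmult_le_reg_r (N2 t * M)). apply Rmult_lt_0_compat; lra.
      replace (u t / N2 t * (N2 t * M)) with (M * u t) by (field; lra).
      replace (/ M * (N2 t * M)) with (N2 t) by (field; lra). exact HZ. }
    assert (K <= Rabs K) by apply Rle_abs.
    assert (0 <= u t / N2 t) by (unfold Rdiv; left; apply Rmult_lt_0_compat; [lra|apply Rinv_0_lt_compat; lra]).
    unfold Rdiv at 1. rewrite Rmult_assoc. fold (u t / N2 t).
    apply Rle_trans with (Rabs K * (u t / N2 t)).
    - apply Rmult_le_compat_r; lra.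
    - unfold Rdiv. apply Rmult_le_compat_l; [apply Rabs_pos|]. unfold Rdiv in H. exact H. }
  assert (Rabs K / M < eps ^ 2).
  { unfold M. assert (0 < eps ^ 2) by (apply pow_lt; lra).
    replace (Rabs K / ((Rabs K + 1) / eps ^ 2)) with (Rabs K / (Rabs K + 1) * eps ^ 2)
      by (field; split; [lra|pose proof (Rabs_pos K); lra]).
    assert (Rabs K / (Rabs K + 1) < 1).
    { pose proof (Rabs_pos K). apply (Rmult_lt_reg_r (Rabs K + 1)); [lra|].
      replace (Rabs K / (Rabs K + 1) * (Rabs K + 1)) with (Rabs K) by (field; lra). lra. }
    nra. }
  lra.
Qed.

Lemma a_TD t : (T t * D t) ^ 2 <= 1.
Proof.
  pose proof (a_con t). pose proof (sq_nonneg (Sp t)).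
  pose proof (sq_nonneg (T t ^ 2 / 3 - 3/4 * D t ^ 2)).
  assert (HA : T t ^ 2 / 3 + 3/4 * D t ^ 2 <= 1) by lra.
  assert (HB : 0 <= T t ^ 2 / 3 + 3/4 * D t ^ 2) by (pose proof (sq_nonneg (T t)); pose proof (sq_nonneg (D t)); lra).
  assert ((T t ^ 2 / 3 + 3/4 * D t ^ 2) ^ 2 <= 1).
  { replace 1 with (1 ^ 2) by ring. apply pow_incr. lra. }
  assert ((T t * D t) ^ 2 = (T t ^ 2 / 3 + 3/4 * D t ^ 2) ^ 2 - (T t ^ 2 / 3 - 3/4 * D t ^ 2) ^ 2) by field.
  lra.
Qed.

Lemma a_case1 t0 : 0 <= t0 -> Sp t0 < 1/2 -> is_lim (A f1) p_infty 0.
Proof.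
  intros Ht0 Hsp. pose proof (A_deriv f1 f1a_cont) as HA.
  set (k := 1 - 2 * Sp t0). assert (Hk : 0 < k) by (unfold k; lra).
  set (G := fun t => A f1 t * exp (k * (t - t0))).
  assert (HG : forall t, t0 <= t -> A f1 t <= (A f1 t0 * exp (k * t0)) * exp (- k * t)).
  { intros t Ht. assert (G t <= G t0).
    { apply mono_nonincr; [lra|]. intros x Hx. eexists; split.
      - unfold G. auto_derive. side. reflexivity.
      - rewrite (D_eq _ _ _ (HA x)).
        match goal with |- ?e <= 0 => replace e with (G x * (2 * (Sp x - Sp t0))) end.
        + assert (0 < G x) by (unfold G; posit). pose proof (a_Sp_mono t0 x ltac:(lra)).
          assert (0 <= G x * (2 * (Sp t0 - Sp x))) by (apply Rmult_le_pos; lra). lra.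
        + unfold G, f1, k. replace (x + - t0) with (x - t0) by ring. ring. }
    unfold G in H. replace (t0 - t0) with 0 in H by ring. rewrite Rmult_0_r, exp_0, Rmult_1_r in H.
    assert (HE : exp (k * (t - t0)) * (exp (k * t0) * exp (- k * t)) = 1).
    { rewrite <- !exp_plus. replace (k * (t - t0) + (k * t0 + - k * t)) with 0 by ring. apply exp_0. }
    assert (0 < exp (k * (t - t0))) by apply exp_pos.
    apply (Rmult_le_reg_r (exp (k * (t - t0)))); [lra|].
    replace (A f1 t0 * exp (k * t0) * exp (- k * t) * exp (k * (t - t0))) with
      (A f1 t0 * (exp (k * (t - t0)) * (exp (k * t0) * exp (- k * t)))) by ring.
    rewrite HE. lra. }
  apply lim0. intros eps Heps. destruct (exp_decay k (A f1 t0 * exp (k * t0)) eps Hk Heps) as [T1 HT1].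
  exists (Rmax t0 T1). intros t Ht. pose proof (Rmax_l t0 T1). pose proof (Rmax_r t0 T1).
  rewrite Rabs_pos_eq by (left; apply A_pos).
  specialize (HG t ltac:(lra)). specialize (HT1 t ltac:(lra)). lra.
Qed.

Lemma a_case2 : (forall t, 0 <= t -> 1/2 <= Sp t) -> False.
Proof.
  intros Hge. pose proof a_dSp as Hp. pose proof a_dT as Hm. pose proof a_dN2 as H2. pose proof a_dN3 as H3.
  assert (Hs0 : Sp 0 < 1).
  { pose proof (a_u2 0). unfold u in *. destruct (Rle_lt_dec 1 (Sp 0)) as [h|h]; [|exact h]. exfalso.
    apply (Hex 0). pose proof (a_con 0). assert (Sp 0 = 1) by lra.
    pose proof (sq_nonneg (T 0)). pose proof (sq_nonneg (D 0)). rewrite H1 in H0.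
    assert (HT : T 0 * T 0 = 0) by lra. assert (HD : D 0 * D 0 = 0) by lra.
    split. destruct (Rmult_integral _ _ HD); unfold D in *; lra. destruct (Rmult_integral _ _ HT); lra. }
  pose proof (Hge 0 ltac:(lra)) as Hs0'.
  set (del := 1 - Sp 0 ^ 2).
  assert (Hdel : 0 < del) by (unfold del; nra).
  assert (Hsq : forall t, 0 <= t -> del <= 1 - Sp t ^ 2).
  { intros t Ht. pose proof (Hge t Ht). pose proof (a_Sp_mono 0 t Ht). unfold del. nra. }
  set (M := 2 / del + 1). assert (HM : 0 < M) by (unfold M; assert (0 < 2/del) by (unfold Rdiv; posit); lra).
  destruct (a_Z M HM) as [T0 [HT0 HZ]].
  assert (HS : forall t, T0 <= t -> 2 / del <= S t /\ 1 <= S t /\ 1 <= u t).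
  { intros t Ht. specialize (HZ t Ht). pose proof (Hge t ltac:(lra)). destruct (Hs t) as (a & b & d).
    unfold S, u in *. assert (M <= M * (1 + Sp t)) by nra. unfold M in *.
    assert (0 < 2/del) by (unfold Rdiv; posit). lra. }
  set (g := fun t => - ln (1 + Sp t) + T t * (N2 t - N3 t) / (6 * (N2 t + N3 t))).
  assert (Hup : forall t, T0 <= t -> g t <= 1/6).
  { intros t Ht. destruct (HS t Ht) as (h1 & h2 & h3). destruct (Hs t) as (a & b & d).
    pose proof (a_TD t) as HTD. unfold g, S, u, D in *.
    assert (0 <= ln (1 + Sp t)).
    { destruct (Req_dec (1 + Sp t) 1) as [e|e]. rewrite e, ln_1; lra. rewrite <- ln_1. left; apply ln_increasing; lra. }
    assert (T t * (N2 t - N3 t) <= 1) by (apply abs_le1; exact HTD).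
    assert (T t * (N2 t - N3 t) / (6 * (N2 t + N3 t)) <= 1/6).
    { apply (Rmult_le_reg_r (6 * (N2 t + N3 t))); [lra|].
      replace (T t * (N2 t - N3 t) / (6 * (N2 t + N3 t)) * (6 * (N2 t + N3 t))) with (T t * (N2 t - N3 t)) by (field; lra).
      lra. }
    lra. }
  set (t1 := T0 + 2 * (Rabs (1/6 - g T0) + 1) / del).
  assert (Ht1 : T0 <= t1). { unfold t1. assert (0 <= 2 * (Rabs (1/6 - g T0) + 1) / del). { unfold Rdiv. left. posit. pose proof (Rabs_pos (1/6 - g T0)); lra. } lra. }
  assert (Hlow : g T0 - del / 2 * T0 <= g t1 - del / 2 * t1).
  { apply (mono_nondecr (fun t => g t - del / 2 * t)); [exact Ht1|]. intros x Hx.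
    destruct (HS x ltac:(lra)) as (h1 & h2 & h3). destruct (Hs x) as (a & b & d).
    pose proof (a_TD x) as HTD. pose proof (Hsq x ltac:(lra)) as Hq. pose proof (a_con x) as Hc.
    pose proof (a_D2 x) as HD2. pose proof (a_u2 x) as Hu2. pose proof (a_u x).
    unfold S, u, D in *.
    eexists; split.
    - unfold g. auto_derive. side. lra. lra. reflexivity.
    - rewrite (D_eq _ _ _ (Hp x)), (D_eq _ _ _ (Hm x)), (D_eq _ _ _ (H2 x)), (D_eq _ _ _ (H3 x)). unfold D, S, u.
      set (dd := N2 x - N3 x). set (ss := N2 x + N3 x). set (w := T x * dd).
      match goal with |- 0 <= ?e => replace e with
        (T x ^ 2 / 3 + 3/4 * dd ^ 2 - 1/4 * (dd ^ 2 * w) / ss - 1/3 * w ^ 2 / ss ^ 2 - del / 2) end.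
      2:{ unfold w, dd, ss. field. lra. }
      assert (Hw : -1 <= w <= 1) by (apply abs_le1; unfold w, dd; exact HTD).
      assert (Hdd : dd ^ 2 <= 4/3) by (pose proof (sq_nonneg (Sp x)); pose proof (sq_nonneg (T x)); unfold dd; lra).
      assert (Hss : 0 < ss) by (unfold ss; lra).
      assert (Hss1 : 1 <= ss) by (unfold ss; lra). assert (Hss2 : 2 / del <= ss) by (unfold ss; lra).
      assert (H1 : (dd ^ 2 * w) / ss <= 4/3 / ss).
      { unfold Rdiv. apply Rmult_le_compat_r. left; posit. pose proof (sq_nonneg dd). nra. }
      assert (H2' : w ^ 2 / ss ^ 2 <= 1 / ss).
      { unfold Rdiv. assert (w ^ 2 <= 1) by (unfold w, dd; lra).
        apply Rle_trans with (1 * / ss ^ 2). apply Rmult_le_compat_r. left; posit; apply pow_lt; lra. lra.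
        rewrite Rmult_1_l, Rmult_1_l. apply Rinv_le_contravar. exact Hss. replace (ss ^ 2) with (ss * ss) by ring.
        assert (ss * 1 <= ss * ss) by (apply Rmult_le_compat_l; lra). lra. }
      assert (H4 : 1 / ss <= del / 2).
      { apply (Rmult_le_reg_r ss); [lra|]. replace (1 / ss * ss) with 1 by (field; lra).
        assert (del / 2 * (2 / del) = 1) by (field; lra).
        assert (del / 2 * (2 / del) <= del / 2 * ss) by (apply Rmult_le_compat_l; lra). lra. }
      assert (T x ^ 2 / 3 + 3/4 * dd ^ 2 = 1 - Sp x ^ 2) by (unfold dd; lra).
      assert (4/3 / ss = 4/3 * (1 / ss)) by (field; lra).
      assert ((dd ^ 2 * w) / ss = (1/4 * (dd ^ 2 * w) / ss) * 4) by (field; lra).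
      assert (1/3 * w ^ 2 / ss ^ 2 = 1/3 * (w ^ 2 / ss ^ 2)) by (field; lra).
      lra. }
  assert (g t1 <= 1/6) by (apply Hup; exact Ht1).
  assert (del / 2 * (t1 - T0) = Rabs (1/6 - g T0) + 1) by (unfold t1; field; lra).
  pose proof (Rle_abs (1/6 - g T0)). lra.
Qed.

Lemma a_lim1 : is_lim (A f1) p_infty 0.
Proof.
  destruct (classic (exists t0, 0 <= t0 /\ Sp t0 < 1/2)) as [[t0 [h1 h2]]|h].
  - exact (a_case1 t0 h1 h2).
  - exfalso. apply a_case2. intros t Ht. destruct (Rle_lt_dec (1/2) (Sp t)) as [e|e]; [exact e|].
    exfalso. apply h. exists t. split; assumption.
Qed.
End Acase.

Lemma lim_from_sq (g : R -> R) C k : 0 < k -> (forall t, 0 < g t) ->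
  (forall t, 0 <= t -> g t ^ 2 <= C * exp (- k * t)) -> is_lim g p_infty 0.
Proof.
  intros Hk Hg H. apply lim0. intros eps He.
  destruct (exp_decay k C (eps ^ 2) Hk ltac:(apply pow_lt; lra)) as [T1 HT].
  exists (Rmax 0 T1). intros t Ht. pose proof (Rmax_l 0 T1). pose proof (Rmax_r 0 T1).
  rewrite Rabs_pos_eq by (left; apply Hg). apply sq_lt; [apply Hg|exact He|].
  specialize (H t ltac:(lra)). specialize (HT t ltac:(lra)). lra.
Qed.

Lemma bnd_from_sq (g : R -> R) C : (forall t, 0 < g t) ->
  (forall t, 0 <= t -> g t ^ 2 <= C) -> bounded_on_nonneg g.
Proof.
  intros Hg H. exists (1 + Rabs C). intros t Ht. rewrite Rabs_pos_eq by (left; apply Hg).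
  specialize (H t Ht). pose proof (Rle_abs C). pose proof (Hg t). pose proof (Rabs_pos C).
  destruct (Rle_lt_dec (g t) 1) as [h|h]; [lra|].
  assert (g t * 1 <= g t * g t) by (apply Rmult_le_compat_l; lra).
  replace (g t ^ 2) with (g t * g t) in H by ring. lra.
Qed.

Lemma exp_le1 k t : 0 <= k -> 0 <= t -> exp (- k * t) <= 1.
Proof.
  intros Hk Ht. rewrite <- exp_0. destruct (Req_dec (k * t) 0) as [e|e].
  - replace (- k * t) with 0 by lra. lra.
  - left. apply exp_increasing. assert (0 <= k * t) by (apply Rmult_le_pos; lra). lra.
Qed.

Lemma s3inv : 3 * / sqrt 3 = sqrt 3.
Proof. pose proof s3_pos. rewrite <- (sqrt_sqrt 3) at 1 by lra. field. lra. Qed.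

Lemma inv_s3 : / sqrt 3 = sqrt 3 / 3.
Proof. pose proof s3_pos. rewrite <- s3inv at 2. field. lra. Qed.

Lemma aof_A (Sig f : R -> R) : (forall s, 3 * Sig s + 1 = f s) -> a_of Sig = A f.
Proof.
  intros H. apply functional_extensionality. intros t. unfold a_of, A, Iof.
  f_equal. f_equal. apply RInt_ext. intros; apply H.
Qed.

Theorem mainTheorem19 (N1 N2 N3 Sp Sm : R -> R) :
  WH_solution N1 N2 N3 Sp Sm ->
  (* (a) *)
  ((forall t, N1 t = 0 /\ 0 < N2 t /\ 0 < N3 t) ->
   (forall t, ~ (N2 t = N3 t /\ Sm t = 0)) ->
   is_lim (a_of (Sigma1 Sp Sm)) p_infty 0 /\
   is_lim (a_of (Sigma2 Sp Sm)) p_infty 0 /\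
   is_lim (a_of (Sigma3 Sp Sm)) p_infty 0) /\
  (* (b) *)
  ((forall t, N1 t < 0 /\ 0 < N2 t /\ 0 < N3 t) ->
   is_lim (a_of (Sigma2 Sp Sm)) p_infty 0 /\
   is_lim (a_of (Sigma3 Sp Sm)) p_infty 0 /\
   bounded_on_nonneg (a_of (Sigma1 Sp Sm)) /\
   bounded_on_nonneg (a_of (Sigma2 Sp Sm)) /\
   bounded_on_nonneg (a_of (Sigma3 Sp Sm))).
Proof.
  intros HW. pose proof (WH_RWH _ _ _ _ _ HW) as HR.
  set (T := fun t => sqrt 3 * Sm t) in *.
  pose proof (RWH_sym _ _ _ _ _ HR) as HR'.
  assert (E1 : a_of (Sigma1 Sp Sm) = A (fun s => 1 - 2 * Sp s)).
  { apply aof_A. intros s. unfold Sigma1. field. }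
  assert (E2 : a_of (Sigma2 Sp Sm) = A (fun s => 1 + Sp s + T s)).
  { apply aof_A. intros s. unfold Sigma2, T. rewrite inv_s3. field. }
  assert (E3 : a_of (Sigma3 Sp Sm) = A (fun s => 1 + Sp s + (fun t => - T t) s)).
  { apply aof_A. intros s. unfold Sigma3, T. rewrite inv_s3. field. }
  rewrite E1, E2, E3. pose proof s3_pos as Hs3. split.
  - intros Hs Hex.
    assert (HexT : forall t, ~ (N2 t = N3 t /\ T t = 0)).
    { intros t [h1 h2]. apply (Hex t). split; [exact h1|]. unfold T in h2.
      destruct (Rmult_integral _ _ h2); lra. }
    assert (Hs' : forall t, N1 t = 0 /\ 0 < N3 t /\ 0 < N2 t).
    { intros t. destruct (Hs t) as (a & b & c). repeat split; assumption. }
    assert (HexT' : forall t, ~ (N3 t = N2 t /\ - T t = 0)).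
    { intros t [h1 h2]. apply (HexT t). split; lra. }
    split; [|split].
    + exact (a_lim1 _ _ _ _ _ HR Hs HexT).
    + exact (a_lim2 _ _ _ _ _ HR Hs HexT).
    + exact (a_lim2 _ _ _ _ _ HR' Hs' HexT').
  - intros Hs.
    assert (Hs' : forall t, N1 t < 0 /\ 0 < N3 t /\ 0 < N2 t).
    { intros t. destruct (Hs t) as (a & b & c). repeat split; assumption. }
    destruct (b_a2 _ _ _ _ _ HR Hs) as [C2 HC2].
    destruct (b_a2 _ _ _ _ _ HR' Hs') as [C3 HC3].
    destruct (b_a1 _ _ _ _ _ HR Hs) as [C1 HC1].
    split; [|split; [|split; [|split]]].
    + eapply lim_from_sq; [| apply A_pos | exact HC2]. lra.
    + eapply lim_from_sq; [| apply A_pos | exact HC3]. lra.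
    + eapply bnd_from_sq; [apply A_pos | exact HC1].
    + apply (bnd_from_sq _ (Rabs C2)); [apply A_pos|]. intros t Ht. specialize (HC2 t Ht).
      pose proof (exp_le1 (2/3) t ltac:(lra) Ht). pose proof (exp_pos (- (2/3) * t)).
      pose proof (Rle_abs C2). assert (C2 * exp (- (2/3) * t) <= Rabs C2 * exp (- (2/3) * t)) by (apply Rmult_le_compat_r; lra).
      assert (Rabs C2 * exp (- (2/3) * t) <= Rabs C2 * 1) by (apply Rmult_le_compat_l; [apply Rabs_pos|lra]). lra.
    + apply (bnd_from_sq _ (Rabs C3)); [apply A_pos|]. intros t Ht. specialize (HC3 t Ht).
      pose proof (exp_le1 (2/3) t ltac:(lra) Ht). pose proof (exp_pos (- (2/3) * t)).
      pose proof (Rle_abs C3). assert (C3 * exp (- (2/3) * t) <= Rabs C3 * exp (- (2/3) * t)) by (apply Rmult_le_compat_r; lra).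
      assert (Rabs C3 * exp (- (2/3) * t) <= Rabs C3 * 1) by (apply Rmult_le_compat_l; [apply Rabs_pos|lra]). lra.
Qed.
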